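(* Let $T$ be a tree on $N>2$ vertices with $M\ge 2$ leaves. Then $$R^+(T)\ge N(N-4)+2(N-1)\left[M+\frac{(N-M)^2}{2(N-1)-M}\right].$$
   Context: For vertices $i,j$ of a connected graph $G$, $R_{ij}$ denotes the effective resistance between $i$ and $j$ when every edge is a unit resistor. The additive degree-Kirchhoff index is $R^+(G)=\sum_{i<j}(d_i+d_j)R_{ij}$, where $d_i$ is the degree of vertex $i$. *)

(* Defs.v *)
From mathcomp Require Import all_boot all_order all_algebra.
Set Implicit Arguments. Unset Strict Implicit. Unset Printing Implicit Defensive.
Import Order.TTheory GRing.Theory Num.Theory.
Local Open Scope ring_scope.

Definition simple_graph n (e : rel 'I_n) : Prop :=
  symmetric e /\ irreflexive e.

Definition connected_graph n (e : rel 'I_n) : Prop :=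
  forall x y : 'I_n, connect e x y.

Definition acyclic_graph n (e : rel 'I_n) : Prop :=
  forall s : seq 'I_n, uniq s -> (3 <= size s)%N -> ~~ cycle e s.

Definition is_tree n (e : rel 'I_n) : Prop :=
  [/\ simple_graph e, connected_graph e & acyclic_graph e].

Definition deg n (e : rel 'I_n) (x : 'I_n) : nat := #|[set y | e x y]|.

Definition num_leaves n (e : rel 'I_n) : nat := #|[set x | deg e x == 1%N]|.

Definition laplacian (R : pzRingType) n (e : rel 'I_n) : 'M[R]_n :=
  \matrix_(i, j) (if i == j then (deg e i)%:R else if e i j then -1 else 0).

(* Effective resistance with unit resistors: inject unit current at i,
   extract at j; a potential w with w L = (e_i - e_j) (L symmetric) is
   w := (e_i - e_j) *m pinvmx L, and R_ij = w_i - w_j = w . (e_i - e_j). *)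
Definition eff_res (R : fieldType) n (e : rel 'I_n) (i j : 'I_n) : R :=
  let u : 'rV[R]_n := delta_mx 0 i - delta_mx 0 j in
  (u *m pinvmx (laplacian R e) *m u^T) 0 0.

Definition add_deg_kirchhoff (R : fieldType) n (e : rel 'I_n) : R :=
  \sum_(i : 'I_n) \sum_(j : 'I_n | (i < j)%N)
     ((deg e i)%:R + (deg e j)%:R) * eff_res R e i j.

(* Main.v *)
Require Import Defs.
From mathcomp Require Import all_boot all_order all_algebra.
From mathcomp Require Import ring lra zify.
Set Implicit Arguments. Unset Strict Implicit. Unset Printing Implicit Defensive.
Import Order.TTheory GRing.Theory Num.Theory.
Local Open Scope ring_scope.

Definition rem_edge n (e : rel 'I_n) (a b : 'I_n) : rel 'I_n :=
  fun x y => e x y && ~~ (((x == a) && (y == b)) || ((x == b) && (y == a))).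

Lemma rem_edge_sub n (e : rel 'I_n) a b : subrel (rem_edge e a b) e.
Proof. by move=> x y /andP[]. Qed.

Lemma rem_edge_sym n (e : rel 'I_n) a b : symmetric e -> symmetric (rem_edge e a b).
Proof.
move=> se x y; rewrite /rem_edge se; congr (_ && ~~ _).
by case: (x == a); case: (y == b); case: (x == b); case: (y == a).
Qed.

Lemma bridge n (e : rel 'I_n) a b : is_tree e -> e a b ->
  ~~ connect (rem_edge e a b) a b.
Proof.
move=> [[se ie] _ acyc] eab; apply/negP => /connectP [p pth].
case: (shortenP pth) => p' pth' uq' _ lst.
case: p' pth' uq' lst => [|x q] /=.
  by move=> _ _ ba; move: eab; rewrite ba ie.
move=> /andP[eax pq] uq lst.
case: q pq uq lst => [|y q] pq uq lst.
  by move: eax; rewrite /= in lst; rewrite -lst /rem_edge !eqxx andbF.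
apply: (negP (acyc (a :: x :: y :: q) uq _)) => //.
rewrite /cycle rcons_path; apply/andP; split.
  by apply: (sub_path (@rem_edge_sub n e a b)); rewrite /= eax.
by rewrite /= in lst *; rewrite -lst se.
Qed.

Lemma key_edge n (e : rel 'I_n) i j : is_tree e -> i != j ->
  exists x, [/\ e i x, ~~ connect (rem_edge e i x) i x &
                ~~ connect (rem_edge e i x) i j].
Proof.
move=> T ij; have [[se ie] conn acyc] := T.
have /connectP [p pth] := conn i j.
case: (shortenP pth) => p' pth' uq' _ lst.
case: p' pth' uq' lst => [|x q] /=.
  by move=> _ _ ji; move: ij; rewrite ji eqxx.
move=> /andP[eix pq] /andP[iq uq] lst.
exists x; split => //; first exact: bridge.
apply/negP => cij; apply: (negP (bridge T eix)).
apply: (connect_trans cij).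
rewrite (sym_connect_sym (rem_edge_sym i x se)) lst.
apply/connectP; exists q => //.
apply: (@sub_in_path _ (predC1 i) e); last exact: pq.
  move=> y z; rewrite !inE => yi zi eyz.
  by rewrite /rem_edge eyz (negbTE yi) (negbTE zi) /= andbF.
apply/allP => y yq /=; apply/eqP => yi; move: iq; by rewrite -yi yq.
Qed.

Definition dl (R : pzRingType) n (a c : 'I_n) : R := (a == c)%:R.

Lemma sum_dl (R : comPzRingType) n (c : 'I_n) (F : 'I_n -> R) :
  \sum_a dl R a c * F a = F c.
Proof.
rewrite (bigD1 c) //= /dl eqxx mul1r big1 ?addr0 // => a /negbTE ->.
by rewrite mul0r.
Qed.

Lemma sum_dl' (R : comPzRingType) n (c : 'I_n) (F : 'I_n -> R) :
  \sum_a F a * dl R a c = F c.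
Proof.
rewrite -[RHS](sum_dl c); apply: eq_bigr => a _; by rewrite mulrC.
Qed.

Lemma degR (R : pzRingType) n (e : rel 'I_n) c :
  (deg e c)%:R = \sum_b (e c b)%:R :> R.
Proof.
rewrite /deg -sum1_card natr_sum big_mkcond /=; apply: eq_bigr => b _.
by rewrite inE; case: (e c b).
Qed.

Definition uv (R : pzRingType) n (a b : 'I_n) : 'rV[R]_n :=
  delta_mx 0 a - delta_mx 0 b.

Definition Xm (R : pzRingType) n (a b : 'I_n) : 'M[R]_n := (uv R a b)^T *m uv R a b.

Lemma uvE (R : pzRingType) n (a b c : 'I_n) (i : 'I_1) : uv R a b i c = dl R a c - dl R b c.
Proof. by rewrite /uv !mxE /dl ord1 /= ![c == _]eq_sym. Qed.

Lemma XmE (R : comPzRingType) n (a b c d : 'I_n) :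
  Xm R a b c d = (dl R a c - dl R b c) * (dl R a d - dl R b d).
Proof. by rewrite /Xm !mxE big_ord1 !mxE /dl /= ![c == _]eq_sym ![d == _]eq_sym. Qed.

Lemma lap2 (R : comPzRingType) n (e : rel 'I_n) : simple_graph e ->
  laplacian R e *+ 2 = \sum_a \sum_b (e a b)%:R *: Xm R a b.
Proof.
move=> [se ie]; apply/matrixP => c d.
have -> : (\sum_a \sum_b (e a b)%:R *: Xm R a b) c d = \sum_a \sum_b
   (e a b)%:R * ((dl R a c - dl R b c) * (dl R a d - dl R b d)).
  rewrite summxE; apply: eq_bigr => a _; rewrite summxE; apply: eq_bigr => b _.
  by rewrite mxE XmE.
rewrite mulmxnE.
have -> : \sum_a \sum_b (e a b)%:R * ((dl R a c - dl R b c) * (dl R a d - dl R b d)) =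
  \sum_a \sum_b ((e a b)%:R * (dl R a c * dl R a d)) +
  \sum_a \sum_b ((e a b)%:R * (dl R b c * dl R b d)) -
  \sum_a \sum_b ((e a b)%:R * (dl R a c * dl R b d)) -
  \sum_a \sum_b ((e a b)%:R * (dl R b c * dl R a d)).
  rewrite -big_split -!sumrB /=; apply: eq_bigr => a _.
  rewrite -big_split -!sumrB /=; apply: eq_bigr => b _.
  ring.
have -> : \sum_a \sum_b ((e a b)%:R * (dl R a c * dl R a d)) =
          \sum_a dl R a c * (dl R a d * (deg e a)%:R).
  apply: eq_bigr => a _; rewrite degR -mulr_suml; ring.
rewrite exchange_big /=.
have -> : \sum_b \sum_a ((e a b)%:R * (dl R b c * dl R b d)) =
          \sum_b dl R b c * (dl R b d * (deg e b)%:R).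
  apply: eq_bigr => b _; rewrite degR -mulr_suml.
  under [X in _ = _ * (_ * X)]eq_bigr => a _ do rewrite se.
  ring.
have -> : \sum_a \sum_b ((e a b)%:R * (dl R a c * dl R b d)) =
          \sum_a dl R a c * \sum_b ((e a b)%:R * dl R b d).
  apply: eq_bigr => a _; rewrite mulr_sumr; apply: eq_bigr => b _; ring.
have -> : \sum_a \sum_b ((e a b)%:R * (dl R b c * dl R a d)) =
          \sum_a dl R a d * \sum_b ((e a b)%:R * dl R b c).
  apply: eq_bigr => a _; rewrite mulr_sumr; apply: eq_bigr => b _; ring.
rewrite !sum_dl !sum_dl'.
rewrite (se d c) mxE /dl.
case: eqVneq => [<-|cd] /=; first by rewrite ie /= mulr2n; ring.
case: (e c d) => /=; rewrite mulr2n; ring.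
Qed.

Lemma sum_dlr (R : comPzRingType) n (c : 'I_n) (F : 'I_n -> R) :
  \sum_a F a * dl R c a = F c.
Proof.
rewrite -[RHS](sum_dl' c); apply: eq_bigr => a _; by rewrite /dl eq_sym.
Qed.

Lemma puv (R : comPzRingType) n (p : 'rV[R]_n) a b :
  (p *m (uv R a b)^T) 0 0 = p 0 a - p 0 b.
Proof.
rewrite mxE; under eq_bigr => k _ do rewrite mxE uvE mulrBr.
by rewrite sumrB !sum_dlr.
Qed.

Lemma uvq (R : comPzRingType) n (q : 'rV[R]_n) a b :
  (uv R a b *m q^T) 0 0 = q 0 a - q 0 b.
Proof.
rewrite mxE; under eq_bigr => k _ do rewrite uvE mxE mulrC mulrBr.
by rewrite sumrB !sum_dlr.
Qed.

Definition Qf (R : pzRingType) n (e : rel 'I_n) (p q : 'rV[R]_n) : R :=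
  \sum_a \sum_b (e a b)%:R * ((p 0 a - p 0 b) * (q 0 a - q 0 b)).

Lemma formE (R : comPzRingType) n (e : rel 'I_n) (p q : 'rV[R]_n) :
  simple_graph e ->
  ((p *m laplacian R e *m q^T) 0 0) *+ 2 = Qf e p q.
Proof.
move=> sg.
have -> : (p *m laplacian R e *m q^T) 0 0 *+ 2 =
          (p *m (laplacian R e *+ 2) *m q^T) 0 0.
  by rewrite mulr2n (mulr2n (laplacian R e)) mulmxDr mulmxDl [RHS]mxE.
rewrite lap2 // mulmx_sumr mulmx_suml summxE; apply: eq_bigr => a _.
rewrite mulmx_sumr mulmx_suml summxE; apply: eq_bigr => b _.
rewrite -scalemxAr -scalemxAl mxE; congr (_ * _).
by rewrite /Xm !mulmxA -(mulmxA (p *m (uv R a b)^T)) mxE big_ord1 puv uvq.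
Qed.

Lemma const_conn (T : eqType) n (e : rel 'I_n) (f : 'I_n -> T) :
  simple_graph e -> connected_graph e ->
  (forall a b, e a b -> f a = f b) -> forall a b, f a = f b.
Proof.
move=> [se ie] conn fe a b.
have cl : closed e [pred z | f z == f a].
  by move=> y z /fe eyz; rewrite !inE eyz.
have := closed_connect cl (conn a b).
by rewrite !inE eqxx => /esym /eqP ->.
Qed.

Lemma term_ge0 (R : realDomainType) (b : bool) (x : R) : 0 <= (b : nat)%:R * (x * x).
Proof. apply: mulr_ge0; first exact: ler0n. rewrite -expr2; exact: sqr_ge0. Qed.

Lemma Qf_ge0 (R : realDomainType) n (e : rel 'I_n) (p : 'rV[R]_n) : 0 <= Qf e p p.
Proof. apply: sumr_ge0 => a _; apply: sumr_ge0 => b _; exact: term_ge0. Qed.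

Lemma Qf0_edge (R : realDomainType) n (e : rel 'I_n) (p : 'rV[R]_n) :
  Qf e p p = 0 -> forall a b, e a b -> p 0 a = p 0 b.
Proof.
move=> H a b eab.
have H1 : \sum_b (e a b)%:R * ((p 0 a - p 0 b) * (p 0 a - p 0 b)) = 0.
  apply: (psumr_eq0P _ H) => // a' _.
  by apply: sumr_ge0 => b' _; exact: term_ge0.
have : (e a b)%:R * ((p 0 a - p 0 b) * (p 0 a - p 0 b)) = 0.
  apply: (psumr_eq0P _ H1) => // b' _; exact: term_ge0.
rewrite eab mul1r => /eqP; rewrite mulf_eq0 orbb subr_eq0 => /eqP.
done.
Qed.

Lemma Qf_sym (R : comPzRingType) n (e : rel 'I_n) (p q : 'rV[R]_n) :
  Qf e p q = Qf e q p.
Proof. by apply: eq_bigr => a _; apply: eq_bigr => b _; ring. Qed.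

Lemma Qf_lin (R : comPzRingType) n (e : rel 'I_n) (p q : 'rV[R]_n) t :
  Qf e (p + t *: q) (p + t *: q) = Qf e p p + 2 * t * Qf e p q + t ^+ 2 * Qf e q q.
Proof.
rewrite /Qf !mulr_sumr -!big_split /=; apply: eq_bigr => a _.
rewrite !mulr_sumr -!big_split /=; apply: eq_bigr => b _.
rewrite !mxE; ring.
Qed.

Lemma cs_aux (R : realFieldType) (a b c : R) : 0 <= c ->
  (forall t, 0 <= a + 2 * t * b + t ^+ 2 * c) -> b ^+ 2 <= a * c.
Proof.
move=> c0 H; have [c00|cpos] := eqVneq c 0.
  rewrite c00 mulr0; have [b0|bn0] := eqVneq b 0; first by rewrite b0 expr0n.
  have := H (- (a + 1) / (2 * b)); rewrite c00 mulr0 addr0.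
  have -> : 2 * (- (a + 1) / (2 * b)) * b = - (a + 1) by field; rewrite bn0.
  lra.
have cp : 0 < c by rewrite lt0r cpos c0.
have := H (- b / c).
have bE : b = (b / c) * c by rewrite divfK.
move: (b / c) bE => s ->.
have -> : - (s * c) / c = - s by field.
nra.
Qed.

Lemma Qf_cs (R : realFieldType) n (e : rel 'I_n) (p q : 'rV[R]_n) :
  Qf e p q ^+ 2 <= Qf e p p * Qf e q q.
Proof.
apply: cs_aux; first exact: Qf_ge0.
move=> t; rewrite -Qf_lin; exact: Qf_ge0.
Qed.

Lemma Lsym (R : pzRingType) n (e : rel 'I_n) : simple_graph e ->
  (laplacian R e)^T = laplacian R e.
Proof.
move=> [se ie]; apply/matrixP => x y; rewrite !mxE (se y x) eq_sym.
by case: eqVneq => // ->.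
Qed.

Lemma Lones (R : comPzRingType) n (e : rel 'I_n) : simple_graph e ->
  laplacian R e *m (const_mx 1 : 'cV[R]_n) = 0.
Proof.
move=> [se ie]; apply/matrixP => c z; rewrite !mxE.
have -> : \sum_k laplacian R e c k * const_mx 1 k z =
          \sum_k (dl R k c * (deg e c)%:R - (e c k)%:R).
  apply: eq_bigr => k _; rewrite !mxE mulr1 /dl eq_sym.
  case: eqVneq => [<-|]; first by rewrite ie mul1r subr0.
  by move=> _; case: (e c k) => /=; ring.
by rewrite sumrB sum_dl degR subrr.
Qed.

Lemma ker_const (R : realFieldType) n (e : rel 'I_n) : simple_graph e ->
  connected_graph e -> (kermx (laplacian R e) <= (const_mx 1 : 'rV[R]_n))%MS.
Proof.
move=> sg conn; apply/row_subP => k.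
set x := row k (kermx (laplacian R e)).
have xL : x *m laplacian R e = 0 by rewrite -row_mul mulmx_ker row0.
have Q0 : Qf e x x = 0 by rewrite -formE // xL mul0mx mxE mul0rn.
have cst := const_conn (f := fun a => x 0 a) sg conn (Qf0_edge Q0).
have -> : x = x 0 k *: const_mx 1.
  apply/matrixP => i a; rewrite (ord1 i) [in RHS]mxE [const_mx _ _ _]mxE mulr1. exact: (cst a k).
by apply: scalemx_sub; rewrite submx_refl.
Qed.

Lemma rank_L (R : realFieldType) n (e : rel 'I_n) : simple_graph e ->
  connected_graph e -> (n - 1 <= \rank (laplacian R e))%N.
Proof.
move=> sg conn.
have := mxrankS (ker_const R sg conn); rewrite mxrank_ker.
have := rank_leq_row (const_mx 1 : 'rV[R]_n).
lia.
Qed.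

Lemma u_sub (R : realFieldType) n (e : rel 'I_n) i j : simple_graph e ->
  connected_graph e -> (uv R i j <= laplacian R e)%MS.
Proof.
move=> sg conn.
set L := laplacian R e; set ones := (const_mx 1 : 'cV[R]_n).
have sLH : (L <= kermx ones)%MS by apply/sub_kermxP; exact: Lones.
have suH : (uv R i j <= kermx ones)%MS.
  apply/sub_kermxP; apply/matrixP => a b.
  have -> : ones = (const_mx 1 : 'rV[R]_n)^T by rewrite trmx_const.
  by rewrite (ord1 a) (ord1 b) uvq !mxE subrr.
have rO : (0 < \rank ones)%N.
  rewrite lt0n mxrank_eq0; apply/eqP => /matrixP /(_ i 0); rewrite !mxE.
  by move/eqP; rewrite oner_eq0.
have rH : (\rank (kermx ones) <= \rank L)%N.
  rewrite mxrank_ker; have := rank_L R sg conn; rewrite -/L; lia.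
have sHL : (kermx ones <= L)%MS.
  case: (mxrank_leqif_sup sLH) => _ <-; rewrite eqn_leq rH andbT.
  exact: mxrankS.
exact: submx_trans suH sHL.
Qed.

Lemma dirichlet (R : realFieldType) n (e : rel 'I_n) i j (p : 'rV[R]_n) :
  simple_graph e -> connected_graph e ->
  (p 0 i - p 0 j) ^+ 2 * 2 <= eff_res R e i j * Qf e p p.
Proof.
move=> sg conn.
set L := laplacian R e; set u := uv R i j.
have su : (u <= L)%MS by exact: u_sub.
set w := u *m pinvmx L.
have wL : w *m L = u by exact: mulmxKpV.
have uT : u^T = L *m w^T by rewrite -wL trmx_mul Lsym.
have Rw : eff_res R e i j = (w *m L *m w^T) 0 0.
  by rewrite /eff_res /= -/u -/L -/w uT mulmxA.
have pu : p 0 i - p 0 j = (p *m L *m w^T) 0 0.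
  by rewrite -puv -/u uT mulmxA.
have F1 := formE p w sg; have F2 := formE w w sg.
have cs := Qf_cs e p w.
rewrite Rw pu; rewrite -/L in F1 F2.
move: cs; rewrite -F1 -F2.
move: (Qf e p p) (Qf_ge0 e p) => Q Q0.
move: ((p *m L *m w^T) 0 0) ((w *m L *m w^T) 0 0) => A B.
rewrite !mulr2n => h; nra.
Qed.

Definition ind (R : pzRingType) n (S : {set 'I_n}) : 'rV[R]_n := \row_x (x \in S)%:R.

Lemma ptwise (R : realFieldType) (s1x s1y s2x s2y P1 P2 : bool) (I1 I2 : R) :
  ((s1x != s1y) -> P1) -> ((s2x != s2y) -> P2) -> ~~ (P1 && P2) ->
  (P1 : nat)%:R <= I1 -> (P2 : nat)%:R <= I2 -> 0 <= I1 -> 0 <= I2 ->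
  (((s1x : nat)%:R - (s2x : nat)%:R) - ((s1y : nat)%:R - (s2y : nat)%:R)) *
  (((s1x : nat)%:R - (s2x : nat)%:R) - ((s1y : nat)%:R - (s2y : nat)%:R)) <= I1 + I2.
Proof.
case: s1x; case: s1y; case: s2x; case: s2y; case: P1; case: P2 => //= h1 h2 h3 h4 h5 h6 h7;
  try (have := h1 isT; done); try (have := h2 isT; done); lra.
Qed.

Lemma Qf_cut (R : realFieldType) n (e : rel 'I_n) (S1 S2 : {set 'I_n})
  (P1 P2 : rel 'I_n) (I1 I2 : 'I_n -> 'I_n -> R) :
  (forall x y, e x y -> (x \in S1) != (y \in S1) -> P1 x y) ->
  (forall x y, e x y -> (x \in S2) != (y \in S2) -> P2 x y) ->
  (forall x y, e x y -> ~~ (P1 x y && P2 x y)) ->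
  (forall x y, (P1 x y : nat)%:R <= I1 x y) -> (forall x y, (P2 x y : nat)%:R <= I2 x y) ->
  (forall x y, 0 <= I1 x y) -> (forall x y, 0 <= I2 x y) ->
  Qf e (ind R S1 - ind R S2) (ind R S1 - ind R S2) <= \sum_x \sum_y (I1 x y + I2 x y).
Proof.
move=> H1 H2 H3 H4 H5 H6 H7.
apply: ler_sum => x _; apply: ler_sum => y _; rewrite /ind !mxE.
case exy: (e x y); last by rewrite mul0r addr_ge0.
rewrite mul1r; apply: ptwise; [exact: H1 x y exy | exact: H2 x y exy | exact: H3 x y exy | by [] | by [] | by [] | by []].
Qed.

Definition Ie (R : pzRingType) n (a b x y : 'I_n) : R :=
  dl R x a * dl R y b + dl R x b * dl R y a.
Definition Pe n (a b : 'I_n) : rel 'I_n :=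
  fun x y => ((x == a) && (y == b)) || ((x == b) && (y == a)).

Lemma Ie_ge0 (R : realFieldType) n (a b x y : 'I_n) : 0 <= Ie R a b x y.
Proof. by rewrite /Ie /dl addr_ge0 // mulr_ge0. Qed.

Lemma Pe_Ie (R : realFieldType) n (a b x y : 'I_n) :
  (Pe a b x y : nat)%:R <= Ie R a b x y.
Proof.
rewrite /Ie /Pe /dl.
case: (x == a); case: (y == b); case: (x == b); case: (y == a) => /=; lra.
Qed.

Lemma sum_dl1 (R : comPzRingType) n (c : 'I_n) : \sum_a dl R a c = 1.
Proof. have := sum_dl c (fun _ => 1 : R); under eq_bigr do rewrite mulr1; done. Qed.

Lemma sum_Ie (R : comPzRingType) n (a b : 'I_n) : \sum_x \sum_y Ie R a b x y = 2.
Proof.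
under eq_bigr => x _ do rewrite big_split /= -!mulr_sumr !sum_dl1 !mulr1.
by rewrite big_split /= !sum_dl1.
Qed.

Lemma cut_side n (e : rel 'I_n) a b : is_tree e ->
  forall x y, e x y ->
  (x \in [set z | connect (rem_edge e a b) a z]) !=
  (y \in [set z | connect (rem_edge e a b) a z]) -> Pe a b x y.
Proof.
move=> [[se ie] _ _] x y exy; apply: contraR => nP.
have e1 : rem_edge e a b x y by rewrite /rem_edge exy.
have e2 : rem_edge e a b y x by rewrite (rem_edge_sym a b se).
rewrite !inE; apply/eqP; apply/idP/idP => h.
  exact: connect_trans h (connect1 e1).
exact: connect_trans h (connect1 e2).
Qed.

Lemma res_ge1 (R : realFieldType) n (e : rel 'I_n) i j :
  is_tree e -> i != j -> 1 <= eff_res R e i j.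
Proof.
move=> T ij; have [sg conn _] := T.
have [x [eix nix nij]] := key_edge T ij.
set S1 := [set z | connect (rem_edge e i x) i z].
have D := @dirichlet R n e i j (ind R S1 - ind R set0) sg conn.
have h0 : forall x y : 'I_n, e x y -> (x \in set0) != (y \in set0) -> false.
  by move=> ? ?; rewrite !inE.
have h0' : forall u v : 'I_n, e u v -> ~~ (Pe i x u v && false) by move=> *; rewrite andbF.
have Q := @Qf_cut R n e S1 set0 (Pe i x) (fun _ _ => false) (Ie R i x) (fun _ _ => 0)
  (@cut_side n e i x T) h0 h0'
  (@Pe_Ie R n i x) (fun _ _ => lexx 0) (@Ie_ge0 R n i x) (fun _ _ => lexx 0).
have G := Qf_ge0 e (ind R S1 - ind R set0).
move: D Q G; rewrite /ind !mxE !inE connect0 (negbTE nij).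
under eq_bigr => a _ do under eq_bigr => b _ do rewrite addr0.
rewrite sum_Ie /=.
move: (Qf _ _ _) (eff_res R e i j) => Qv Rv h1 h2 h3.
rewrite !subr0 expr1n mul1r in h1.
have Qp : 0 < Qv by rewrite lt_neqAle h3 andbT; apply/eqP => q0; move: h1; rewrite -q0 mulr0; lra.
nra.
Qed.

Lemma res_ge2 (R : realFieldType) n (e : rel 'I_n) i j :
  is_tree e -> i != j -> ~~ e i j -> 2 <= eff_res R e i j.
Proof.
move=> T ij nej; have [sg conn _] := T.
have [x [eix nix nij]] := key_edge T ij.
have ji : j != i by rewrite eq_sym.
have [y [ejy njy nji]] := key_edge T ji.
set S1 := [set z | connect (rem_edge e i x) i z].
set S2 := [set z | connect (rem_edge e j y) j z].
have D := @dirichlet R n e i j (ind R S1 - ind R S2) sg conn.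
have h3 : forall u v, e u v -> ~~ (Pe i x u v && Pe j y u v).
  move=> u v _; apply/negP => /andP [h1 h2]; move: h1 h2; rewrite /Pe.
  case/orP => /andP [/eqP ui /eqP vx]; case/orP => /andP [/eqP uj /eqP vy].
  - by move: ij; rewrite -ui uj eqxx.
  - by move: nej; rewrite -vy vx eix.
  - by move: nej; rewrite -uj ui eix.
  - by move: ij; rewrite -vx vy eqxx.
have Q := @Qf_cut R n e S1 S2 (Pe i x) (Pe j y) (Ie R i x) (Ie R j y)
  (@cut_side n e i x T) (@cut_side n e j y T) h3
  (@Pe_Ie R n i x) (@Pe_Ie R n j y) (@Ie_ge0 R n i x) (@Ie_ge0 R n j y).
have G := Qf_ge0 e (ind R S1 - ind R S2).
move: D Q G; rewrite /ind !mxE !inE !connect0 (negbTE nij) (negbTE nji).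
under eq_bigr => a _ do rewrite big_split /=.
rewrite big_split /= !sum_Ie.
move: (Qf _ _ _) (eff_res R e i j) => Qv Rv h1 h2 h3'.
have h1' : 8 <= Rv * Qv by move: h1; rewrite /=; lra.
have Qp : 0 < Qv by rewrite lt_neqAle h3' andbT; apply/eqP => q0; move: h1'; rewrite -q0 mulr0; lra.
nra.
Qed.

Lemma symsumV (V : zmodType) n (F : 'I_n -> 'I_n -> V) :
  (forall i j, F i j = F j i) ->
  \sum_i \sum_j F i j = (\sum_(i : 'I_n) \sum_(j : 'I_n | (i < j)%N) F i j) *+ 2 + \sum_i F i i.
Proof.
move=> Fs.
have E : forall i : 'I_n, \sum_j F i j =
   \sum_(j : 'I_n | (i < j)%N) F i j + \sum_(j : 'I_n | (j < i)%N) F i j + F i i.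
  move=> i; rewrite (bigID (fun j : 'I_n => (i < j)%N)) /= -addrA; congr (_ + _).
  rewrite (bigID (fun j : 'I_n => (j < i)%N)) /=; congr (_ + _).
    by apply: eq_bigl => j; case: ltngtP.
  rewrite (big_pred1 i) // => j /=; rewrite -val_eqE /=; by case: ltngtP.
rewrite (eq_bigr _ (fun i _ => E i)) !big_split /= mulr2n; congr (_ + _ + _).
rewrite (exchange_big_dep xpredT) //=.
by apply: eq_bigr => i _; apply: eq_big => j // _; rewrite Fs.
Qed.

Lemma rank_sum (R : fieldType) m n (I : finType) (P : pred I) (A : I -> 'M[R]_(m, n)) :
  (\rank (\sum_(i | P i) A i)%R <= \sum_(i | P i) \rank (A i))%N.
Proof.
elim/big_rec2: _ => [|i k B _ IH]; first by rewrite mxrank0.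
by apply: leq_trans (mxrank_add _ _) _; rewrite leq_add2l.
Qed.

Lemma Xm_sym (R : comPzRingType) n (a b : 'I_n) : Xm R a b = Xm R b a.
Proof. by apply/matrixP => c d; rewrite !XmE; ring. Qed.

Lemma edge_bound (R : realFieldType) n (e : rel 'I_n) : simple_graph e ->
  connected_graph e ->
  (n - 1 <= \sum_(i : 'I_n) \sum_(j : 'I_n | (i < j)%N) (e i j : nat))%N.
Proof.
move=> sg conn; have [se ie] := sg.
have := rank_L R sg conn.
set M := \sum_(i : 'I_n) \sum_(j : 'I_n | (i < j)%N) (e i j)%:R *: Xm R i j.
have LM : laplacian R e *+ 2 = M *+ 2.
  rewrite lap2 // (@symsumV _ _ (fun a b => (e a b)%:R *: Xm R a b)); last by move=> a b; rewrite se Xm_sym.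
  have -> : \sum_i (e i i)%:R *: Xm R i i = 0 by apply: big1 => i _; rewrite ie scale0r.
  by rewrite addr0.
have rk : \rank (laplacian R e) = \rank M.
  rewrite -(mxrank_scale_nz (laplacian R e) (_ : 2%:R != 0 :> R)) ?pnatr_eq0 //.
  by rewrite -(mxrank_scale_nz M (_ : 2%:R != 0 :> R)) ?pnatr_eq0 // !scaler_nat LM.
rewrite rk => h; apply: leq_trans h _.
apply: leq_trans (rank_sum _ _) _; apply: leq_sum => i _.
apply: leq_trans (rank_sum _ _) _; apply: leq_sum => j _.
case: (e i j); last by rewrite scale0r mxrank0.
rewrite scale1r /Xm; apply: leq_trans (mxrankM_maxr _ _) _; exact: rank_leq_row.
Qed.

Lemma poly (R : realFieldType) (k m : R) : 0 <= k -> 0 <= m ->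
  2 * ((k + 3) - 1) * ((k + 3) - (k + 2 - m)) ^+ 2 <= (3 * (k + 3) ^+ 2 - 6 * (k + 3) + 6 - (k + 2 - m) * (3 * (k + 3) - 4)) * (2 * ((k + 3) - 1) - (k + 2 - m)).
Proof.
move=> hk hm.
have h1 : 0 <= k * m by exact: mulr_ge0.
have h2 : 0 <= k * m * m by rewrite mulr_ge0.
have h3 : 0 <= k * k * m by rewrite mulr_ge0 // mulr_ge0.
have h4 : 0 <= k * k by exact: mulr_ge0.
have h5 : 0 <= m * m by exact: mulr_ge0.
nra.
Qed.

Lemma final (R : realFieldType) (N M S1 f : R) : 3 <= N -> 2 <= M ->
  (N - 3) * S1 + N * (2 * N - 2) - (N - 2) * M <= f ->
  2 * (N - 1) <= S1 -> S1 <= N * (N - 1) - (N - 2) * M ->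
  N * (N - 4) + 2 * (N - 1) * (M + (N - M) ^+ 2 / (2 * (N - 1) - M)) <= f.
Proof.
move=> hN hM hf hS1 hS2.
have hMN : M <= N - 1.
  have : (N - 2) * (N - M - 1) >= 0 by nra.
  move=> h; rewrite leNgt; apply/negP => hc.
  have : (N - 2) * (N - M - 1) < 0 by rewrite pmulr_rlt0; lra.
  lra.
have hD : 0 < 2 * (N - 1) - M by lra.
have h1 : (N - 3) * (2 * (N - 1)) <= (N - 3) * S1 by apply: ler_wpM2l; lra.
have hf' : (N - 1) * (4 * N - 6) - M * (N - 2) <= f.
  apply: le_trans hf.
  have -> : (N - 1) * (4 * N - 6) - M * (N - 2) = (N - 3) * (2 * (N - 1)) + N * (2 * N - 2) - (N - 2) * M by ring.
  by rewrite lerB // lerD2r.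
apply: le_trans hf'.
set D := 2 * (N - 1) - M.
have -> : N * (N - 4) + 2 * (N - 1) * (M + (N - M) ^+ 2 / D) =
          N * (N - 4) + 2 * (N - 1) * M + (2 * (N - 1) * (N - M) ^+ 2) / D by field; rewrite lt0r_neq0.
rewrite -subr_ge0.
have -> : (N - 1) * (4 * N - 6) - M * (N - 2) - (N * (N - 4) + 2 * (N - 1) * M + 2 * (N - 1) * (N - M) ^+ 2 / D) =
   ((3 * N ^+ 2 - 6 * N + 6 - M * (3 * N - 4)) * D - 2 * (N - 1) * (N - M) ^+ 2) / D.
  by field; rewrite lt0r_neq0.
apply: divr_ge0; last exact: ltW.
rewrite subr_ge0 /D.
have P := @poly R (N - 3) (N - 1 - M) ltac:(lra) ltac:(lra).
have e1 : N - 3 + 3 = N by ring.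
have e2 : N - 3 + 2 - (N - 1 - M) = M by ring.
by rewrite e1 e2 in P.
Qed.

Lemma exists_other n (i : 'I_n) : (1 < n)%N -> exists j : 'I_n, j != i.
Proof.
move=> h1; have h0 : (0 < n)%N by apply: ltn_trans h1.
case: (eqVneq i (Ordinal h0)) => [->|ne].
  by exists (Ordinal h1); apply/eqP => /(congr1 val).
by exists (Ordinal h0); rewrite eq_sym.
Qed.

Lemma deg_ge1 n (e : rel 'I_n) i : is_tree e -> (1 < n)%N -> (0 < deg e i)%N.
Proof.
move=> T h1; have [j ji] := exists_other i h1.
have ij : i != j by rewrite eq_sym.
have [x [eix _ _]] := key_edge T ij.
by apply/card_gt0P; exists x; rewrite inE.
Qed.

Lemma deg_le n (e : rel 'I_n) i : simple_graph e -> (deg e i <= n - 1)%N.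
Proof.
move=> [se ie]; rewrite /deg.
have sub : [set y | e i y] \subset [set~ i].
  by apply/subsetP => y; rewrite !inE; apply: contraTneq => ->; rewrite ie.
by apply: leq_trans (subset_leq_card sub) _; rewrite cardsC1 card_ord subn1.
Qed.

Lemma leavesR (R : pzRingType) n (e : rel 'I_n) :
  (num_leaves e)%:R = \sum_i ((deg e i == 1)%N : nat)%:R :> R.
Proof.
rewrite /num_leaves -sum1_card natr_sum big_mkcond /=; apply: eq_bigr => b _.
by rewrite inE; case: (deg e b == 1)%N.
Qed.

Lemma sum_lin (R : comPzRingType) n (a b c : R) (x y : 'I_n -> R) :
  \sum_i (a * x i + b + c * y i) = a * \sum_i x i + n%:R * b + c * \sum_i y i.
Proof. by rewrite !big_split /= -!mulr_sumr sumr_const card_ord mulr_natl. Qed.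

Lemma pw (R : realFieldType) (dn Nn : nat) : (1 <= dn)%N -> (dn <= Nn - 1)%N -> (2 < Nn)%N ->
  (Nn%:R - 3) * dn%:R + (2 * Nn%:R - 2) + (- (Nn%:R - 2)) * ((dn == 1)%N : nat)%:R
    <= dn%:R * (2 * (Nn%:R - 1) - dn%:R) :> R.
Proof.
move=> h1 h2 h3; case: (eqVneq dn 1%N) => [->|d1] /=; first by lra.
have hd2 : (2 <= dn)%N by lia.
have r2 : (2 : R) <= dn%:R by rewrite (ler_nat R 2).
have rN : dn%:R <= (Nn%:R : R) - 1.
  have : (dn + 1 <= Nn)%N by lia.
  rewrite -(ler_nat R) natrD; lra.
have := mulr_ge0 (_ : 0 <= dn%:R - 2 :> R) (_ : 0 <= Nn%:R - 1 - dn%:R :> R).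
rewrite mulr0; move=> h; have := h ltac:(lra) ltac:(lra); nra.
Qed.

Lemma pw2 (R : realFieldType) (dn Nn : nat) : (1 <= dn)%N -> (dn <= Nn - 1)%N -> (2 < Nn)%N ->
  dn%:R <= 0 * 0 + (Nn%:R - 1) + (- (Nn%:R - 2)) * ((dn == 1)%N : nat)%:R :> R.
Proof.
move=> h1 h2 h3; case: (eqVneq dn 1%N) => [->|d1] /=; first by lra.
have : (dn + 1 <= Nn)%N by lia.
rewrite -(ler_nat R) natrD; lra.
Qed.


Lemma hA_gen (R : comPzRingType) n (d : 'I_n -> R) :
  \sum_i \sum_j (2 * d i + 2 * d j) = 4 * n%:R * \sum_i d i.
Proof.
under eq_bigr => i _ do rewrite big_split /= sumr_const card_ord -mulr_sumr.
rewrite big_split /= sumr_const card_ord sumrMnl -mulr_sumr.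
ring.
Qed.

Unset Implicit Arguments.

Theorem corollary1 (R : realFieldType) (N M : nat) (e : rel 'I_N) :
  (2 < N)%N -> is_tree e -> num_leaves e = M -> (2 <= M)%N ->
  add_deg_kirchhoff R e >=
    N%:R * (N%:R - 4) + 2 * (N%:R - 1) *
      (M%:R + (N%:R - M%:R) ^+ 2 / (2 * (N%:R - 1) - M%:R)).
Proof.
move=> hN T hM hM2; have [sg conn acyc] := T; have [se ie] := sg.
pose d i := (deg e i)%:R : R.
pose S1 := \sum_i d i.
pose S2 := \sum_i d i * d i.
pose G i j := (d i + d j) * (2 - (e i j)%:R).
pose LB := \sum_(i : 'I_N) \sum_(j : 'I_N | (i < j)%N) G i j.
have hLB : LB <= add_deg_kirchhoff R e.
  rewrite /add_deg_kirchhoff; apply: ler_sum => i _; apply: ler_sum => j ij.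
  apply: ler_wpM2l; first by rewrite addr_ge0 ?ler0n.
  have nij : i != j by rewrite -val_eqE /= ltn_eqF.
  case eij: (e i j) => /=.
    by have := res_ge1 R T nij; lra.
  by have := res_ge2 R T nij (negbT eij); lra.
have Gs : forall i j, G i j = G j i by move=> i j; rewrite /G se addrC.
have E1 := symsumV Gs.
have E2 : \sum_i G i i = S1 * 4.
  rewrite /S1 mulr_suml; apply: eq_bigr => i _; rewrite /G ie /=; ring.
have E3 : \sum_i \sum_j G i j = 4 * N%:R * S1 - 2 * S2.
  have -> : \sum_i \sum_j G i j = \sum_i \sum_j (2 * d i + 2 * d j)
      - \sum_i \sum_j ((e i j)%:R * d i) - \sum_i \sum_j ((e i j)%:R * d j).
    rewrite -!sumrB; apply: eq_bigr => i _; rewrite -!sumrB; apply: eq_bigr => j _.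
    rewrite /G; ring.
  have hA : \sum_i \sum_j (2 * d i + 2 * d j) = 4 * N%:R * S1.
    exact: hA_gen.
  have hB : \sum_i \sum_j ((e i j)%:R * d i) = S2.
    by apply: eq_bigr => i _; rewrite -mulr_suml -degR.
  have hC : \sum_i \sum_j ((e i j)%:R * d j) = S2.
    rewrite exchange_big; apply: eq_bigr => j _; rewrite -mulr_suml.
    by under eq_bigr => i _ do rewrite se; rewrite -degR.
  by rewrite hA hB hC; ring.
have hLBv : LB = 2 * (N%:R - 1) * S1 - S2.
  have : LB *+ 2 + S1 * 4 = 4 * N%:R * S1 - 2 * S2 by rewrite -E2 -E3 E1.
  rewrite mulr2n; lra.
have hdeg : forall i, (1 <= deg e i)%N /\ (deg e i <= N - 1)%N.
  move=> i; split; [apply: deg_ge1 => //; lia | exact: deg_le].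
have hMl : M%:R = \sum_i ((deg e i == 1)%N : nat)%:R :> R by rewrite -hM leavesR.
have hf : (N%:R - 3) * S1 + N%:R * (2 * N%:R - 2) - (N%:R - 2) * M%:R
            <= 2 * (N%:R - 1) * S1 - S2.
  have h : \sum_i ((N%:R - 3) * d i + (2 * N%:R - 2) + (- (N%:R - 2)) * ((deg e i == 1)%N : nat)%:R)
      <= \sum_i (d i * (2 * (N%:R - 1) - d i)).
    by apply: ler_sum => i _; have [h1 h2] := hdeg i; exact: pw.
  rewrite sum_lin -hMl in h.
  have -> : 2 * (N%:R - 1) * S1 - S2 = \sum_i (d i * (2 * (N%:R - 1) - d i)).
    by rewrite /S1 /S2 mulr_sumr -sumrB; apply: eq_bigr => i _; ring.
  apply: le_trans h; rewrite -/S1; lra.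
have hS1up : S1 <= N%:R * (N%:R - 1) - (N%:R - 2) * M%:R.
  have h : \sum_i d i <= \sum_i (0 * 0 + (N%:R - 1) + (- (N%:R - 2)) * ((deg e i == 1)%N : nat)%:R).
    by apply: ler_sum => i _; have [h1 h2] := hdeg i; exact: pw2.
  rewrite sum_lin -hMl in h.
  move: h; rewrite mul0r add0r => h; apply: (le_trans h); lra.
have hS1lo : 2 * (N%:R - 1) <= S1.
  have -> : S1 = \sum_i \sum_j (e i j)%:R by apply: eq_bigr => i _; rewrite /d degR.
  rewrite (@symsumV _ _ (fun i j => (e i j)%:R)); last by move=> i j; rewrite se.
  have -> : \sum_i ((e i i : nat)%:R : R) = 0 by apply: big1 => i _; rewrite ie.
  rewrite addr0.
  have -> : \sum_(i : 'I_N) \sum_(j : 'I_N | (i < j)%N) ((e i j : nat)%:R : R) =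
            (\sum_(i : 'I_N) \sum_(j : 'I_N | (i < j)%N) (e i j : nat))%:R.
    by rewrite natr_sum; apply: eq_bigr => i _; rewrite natr_sum.
  have := edge_bound R sg conn; rewrite -(ler_nat R) natrB; last by lia.
  rewrite mulr2n; lra.
have h3 : (3 : R) <= N%:R by rewrite (ler_nat R 3).
have h2 : (2 : R) <= M%:R by rewrite (ler_nat R 2).
have H := @final R N%:R M%:R S1 (2 * (N%:R - 1) * S1 - S2) h3 h2 hf hS1lo hS1up.
by apply: le_trans H _; rewrite -hLBv.
Qed.
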